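(* Let $B\in\mathbb R^{n\times m}$, let $T_{\mathcal U}$ be a symmetric positive definite $m\times m$ matrix, and let $f:\mathbb R^m\to\mathbb R$ be differentiable with $f\in\mathcal S^{1,1}_{\mu_{f,T_{\mathcal U}},L_{f,T_{\mathcal U}}}$ with respect to $T_{\mathcal U}$. For $u_1,u_2\in\mathbb R^m$, $p_1,p_2\in\mathbb R^n$, let $v_i=u_i+T_{\mathcal U}^{-1}B^\top p_i$. Then $$\big(\nabla f(u_1)-\nabla f(u_2),T_{\mathcal U}^{-1}B^\top(p_1-p_2)\big)\ge\frac{\mu_{f,T_{\mathcal U}}}{2}\|v_1-v_2\|^2_{T_{\mathcal U}}-\frac{L_{f,T_{\mathcal U}}}{2}\|B^\top(p_1-p_2)\|^2_{T_{\mathcal U}^{-1}}-\frac12\big(\nabla f(u_1)-\nabla f(u_2),u_1-u_2\big).$$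
   Context: For SPD $M$, $\|x\|_M=(Mx,x)^{1/2}$; $D_f(y,x)=f(y)-f(x)-(\nabla f(x),y-x)$; $f\in\mathcal S^{1,1}_{\mu_{f,M},L_{f,M}}$ w.r.t. $M$ means $\frac{\mu_{f,M}}2\|x-y\|_M^2\le D_f(y,x)\le\frac{L_{f,M}}2\|x-y\|_M^2$ for all $x,y$, with $\mu_{f,M}\ge0$. *)

(* Defs.v *)
From HB Require Import structures.
From mathcomp Require Import all_boot all_order all_algebra.
From mathcomp Require Import all_classical all_reals all_analysis.
Set Implicit Arguments. Unset Strict Implicit. Unset Printing Implicit Defensive.
Import Order.TTheory GRing.Theory Num.Theory.
Import numFieldNormedType.Exports.
Local Open Scope ring_scope.

Definition dotv (R : realType) (n : nat) (x y : 'cV[R]_n) : R := (x^T *m y) 0 0.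

Definition spd (R : realType) (n : nat) (M : 'M[R]_n) : Prop :=
  M^T = M /\ forall x : 'cV[R]_n, x != 0 -> 0 < dotv (M *m x) x.

Definition sqnormM (R : realType) (n : nat) (M : 'M[R]_n) (x : 'cV[R]_n) : R :=
  dotv (M *m x) x.

Definition bregman (R : realType) (n : nat) (f : 'cV[R]_n -> R)
  (gradf : 'cV[R]_n -> 'cV[R]_n) (y x : 'cV[R]_n) : R :=
  f y - f x - dotv (gradf x) (y - x).

Definition S11 (R : realType) (n : nat) (M : 'M[R]_n) (mu L : R)
  (f : 'cV[R]_n -> R) (gradf : 'cV[R]_n -> 'cV[R]_n) : Prop :=
  0 <= mu /\
  forall x y : 'cV[R]_n,
    mu / 2 * sqnormM M (x - y) <= bregman f gradf y x /\
    bregman f gradf y x <= L / 2 * sqnormM M (x - y).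

Definition is_gradient (R : realType) (n : nat) (f : 'cV[R]_n -> R)
  (gradf : 'cV[R]_n -> 'cV[R]_n) : Prop :=
  forall x : 'cV[R]_n, differentiable f x /\ ('d f x : 'cV[R]_n -> R) = (fun h => dotv (gradf x) h).

(* Main.v *)
Require Import Defs.
From mathcomp Require Import all_boot all_order all_algebra.
From mathcomp Require Import all_classical all_reals all_analysis.
From mathcomp Require Import ring lra.
Import Order.TTheory GRing.Theory Num.Theory.
Local Open Scope ring_scope.

Section Aux.
Variables (R : realType) (m : nat).
Implicit Types (x y z a b c : 'cV[R]_m).

Lemma dotvDr x y z : dotv x (y + z) = dotv x y + dotv x z.
Proof. by rewrite /dotv mulmxDr mxE. Qed.
Lemma dotvDl x y z : dotv (x + y) z = dotv x z + dotv y z.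
Proof. by rewrite /dotv linearD /= mulmxDl mxE. Qed.
Lemma dotvNr x y : dotv x (- y) = - dotv x y.
Proof. by rewrite /dotv mulmxN mxE. Qed.
Lemma dotvNl x y : dotv (- x) y = - dotv x y.
Proof. by rewrite /dotv linearN /= mulNmx mxE. Qed.
Lemma dotvBr x y z : dotv x (y - z) = dotv x y - dotv x z.
Proof. by rewrite dotvDr dotvNr. Qed.
Lemma dotvBl x y z : dotv (x - y) z = dotv x z - dotv y z.
Proof. by rewrite dotvDl dotvNl. Qed.

Lemma dotvC x y : dotv x y = dotv y x.
Proof. by rewrite /dotv -[in RHS](trmxK (y^T *m x)) [in RHS]mxE trmx_mul trmxK. Qed.

Lemma vecE1 a b c : b - (a + c) = - ((a - b) + c).
Proof. by apply/matrixP => i j; rewrite !mxE; ring. Qed.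
Lemma vecE2 a c : a - (a + c) = - c.
Proof. by apply/matrixP => i j; rewrite !mxE; ring. Qed.
Lemma vecE3 a b c : a - (b - c) = (a - b) + c.
Proof. by apply/matrixP => i j; rewrite !mxE; ring. Qed.
Lemma vecE4 a c : a - (a - c) = c.
Proof. by apply/matrixP => i j; rewrite !mxE; ring. Qed.
Lemma vecE5 a c : a + c - a = c.
Proof. by apply/matrixP => i j; rewrite !mxE; ring. Qed.
Lemma vecE6 a c : a - c - a = - c.
Proof. by apply/matrixP => i j; rewrite !mxE; ring. Qed.

Lemma sqnormN (M : 'M[R]_m) x : sqnormM M (- x) = sqnormM M x.
Proof. by rewrite /sqnormM mulmxN dotvNl dotvNr opprK. Qed.

Lemma breg3 (f : 'cV[R]_m -> R) gf x y z :
  bregman f gf y x = bregman f gf z x - bregman f gf z y - dotv (gf y - gf x) (z - y).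
Proof.
rewrite /bregman dotvBl !dotvBr.
lra.
Qed.
End Aux.

Theorem lemma5p1 (R : realType) (n m : nat) (B : 'M[R]_(n, m)) (TU : 'M[R]_m)
  (f : 'cV[R]_m -> R) (gradf : 'cV[R]_m -> 'cV[R]_m) (mu L : R) :
  spd TU ->
  is_gradient f gradf ->
  S11 TU mu L f gradf ->
  forall (u1 u2 : 'cV[R]_m) (p1 p2 : 'cV[R]_n),
    let v1 := u1 + invmx TU *m (B^T *m p1) in
    let v2 := u2 + invmx TU *m (B^T *m p2) in
    dotv (gradf u1 - gradf u2) (invmx TU *m (B^T *m (p1 - p2)))
      >= mu / 2 * sqnormM TU (v1 - v2)
         - L / 2 * sqnormM (invmx TU) (B^T *m (p1 - p2))
         - 1 / 2 * dotv (gradf u1 - gradf u2) (u1 - u2).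
Proof.
move=> [Tsym Tpos] _ [mu0 HS] u1 u2 p1 p2 /=.
have Tunit : TU \in unitmx.
  rewrite unitmxE unitfE; apply/negP => /det0P [v v0 vT].
  have : (v^T != 0) by rewrite -(inj_eq (@trmx_inj _ _ _)) trmxK linear0.
  move=> /Tpos; rewrite /dotv trmx_mul trmxK Tsym vT mul0mx mxE ltxx //.
set q := B^T *m (p1 - p2).
set w := invmx TU *m q.
have ev : (u1 + invmx TU *m (B^T *m p1)) - (u2 + invmx TU *m (B^T *m p2)) = (u1 - u2) + w.
  rewrite /w /q mulmxBr mulmxBr.
  rewrite opprD addrACA.
  by [].
have esq : sqnormM (invmx TU) q = sqnormM TU w.
  rewrite /sqnormM /w (mulmxA TU) (mulmxV Tunit) mul1mx.
  by rewrite dotvC.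
rewrite ev esq.
set g := gradf u1 - gradf u2.
set d := u1 - u2.
have I1 := @breg3 _ _ f gradf u2 u1 (u1 + w).
have I2 := @breg3 _ _ f gradf u1 u2 (u2 - w).
have I3 : bregman f gradf u1 u2 + bregman f gradf u2 u1 = dotv g d.
  rewrite /bregman /g /d dotvBl !dotvBr; lra.
have [H1 _] := HS u2 (u1 + w).
have [_ H2] := HS u1 (u1 + w).
have [H3 _] := HS u1 (u2 - w).
have [_ H4] := HS u2 (u2 - w).
have e1 : u2 - (u1 + w) = - (d + w) by rewrite /d vecE1.
have e2 : u1 - (u1 + w) = - w by rewrite /d vecE2.
have e3 : u1 - (u2 - w) = d + w by rewrite /d vecE3.
have e4 : u2 - (u2 - w) = w by rewrite /d vecE4.
rewrite e1 sqnormN in H1; rewrite e2 sqnormN in H2; rewrite e3 in H3; rewrite e4 in H4.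
have e5 : u1 + w - u1 = w by rewrite /d vecE5.
have e6 : u2 - w - u2 = - w by rewrite /d vecE6.
rewrite e5 -/g in I1.
rewrite e6 in I2.
have e7 : dotv (gradf u2 - gradf u1) (- w) = dotv g w.
  by rewrite dotvNr /g dotvBl dotvBl opprB.
rewrite e7 in I2.
have L0 : 0 <= 1 by [].
lra.
Qed.
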